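(* For every balanced word $X$, the reduction algorithm applied to $X$ terminates after finitely many steps.
   Context: Words are finite products of the letters $L,R$; a subword is a contiguous block of letters. A word is balanced if it contains equally many $L$'s and $R$'s. A word is prime if it is nonempty, balanced, and not a product of two nonempty balanced words. For a balanced word $W=a_1\cdots a_n$, $e_k(W)=\sum_{i=1}^k\overline{a_i}$ with $\overline{R}=1$, $\overline{L}=-1$. A prime $P$ of length $n$ is an upper prime if $e_k(P)>0$ for $1\le k\le n-1$, and a lower prime if $e_k(P)<0$ for $1\le k\le n-1$. A word is reduced if it contains no subword $UD$ with $U$ an upper prime and $D$ a lower prime. The reduction algorithm: set $X_0=X$. For $i\ge 0$, if $X_i$ is reduced, stop and output $X_i$; otherwise take the leftmost occurrence of a subword of the form $UD$ ($U$ upper prime, $D$ lower prime), write $X_i=W_1UDW_2$ accordingly, and set $X_{i+1}=W_1DUW_2$. *)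

(* Defs.v *)
From Stdlib Require Import List ZArith.
Import ListNotations.
Open Scope Z_scope.

Inductive letter : Type := L | R.

Definition word := list letter.

Definition lval (a : letter) : Z := match a with R => 1 | L => -1 end.

Definition height (w : word) : Z := fold_right (fun a s => lval a + s) 0 w.

Definition e (k : nat) (w : word) : Z := height (firstn k w).

Definition balanced (w : word) : Prop := height w = 0.

Definition prime_word (P : word) : Prop :=
  P <> [] /\ balanced P /\
  ~ (exists A B : word, A <> [] /\ B <> [] /\ balanced A /\ balanced B /\ P = A ++ B).

Definition upper_prime (P : word) : Prop :=
  prime_word P /\
  forall k : nat, (1 <= k)%nat -> (k <= length P - 1)%nat -> e k P > 0.

Definition lower_prime (P : word) : Prop :=
  prime_word P /\
  forall k : nat, (1 <= k)%nat -> (k <= length P - 1)%nat -> e k P < 0.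

Definition reduced (X : word) : Prop :=
  ~ (exists W1 U D W2 : word,
        X = W1 ++ U ++ D ++ W2 /\ upper_prime U /\ lower_prime D).

(* One step of the reduction algorithm: take the leftmost occurrence of a
   subword U D (U upper prime, D lower prime), X = W1 U D W2, and output
   W1 D U W2. "Leftmost" = no such occurrence starts strictly earlier. *)
Definition reduction_step (X Y : word) : Prop :=
  exists W1 U D W2 : word,
    X = W1 ++ U ++ D ++ W2 /\ upper_prime U /\ lower_prime D /\
    Y = W1 ++ D ++ U ++ W2 /\
    (forall W1' U' D' W2' : word,
        X = W1' ++ U' ++ D' ++ W2' -> upper_prime U' -> lower_prime D' ->
        (length W1 <= length W1')%nat).

(* A run of the reduction algorithm from X: X_0 = X, and X_{i+1} is obtained
   from X_i by a reduction step whenever X_i is not reduced (once a reduced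
   word is reached the algorithm stops; we then keep the sequence constant). *)
Definition reduction_run (X : word) (f : nat -> word) : Prop :=
  f 0%nat = X /\
  forall i : nat,
    (reduced (f i) -> f (S i) = f i) /\
    (~ reduced (f i) -> reduction_step (f i) (f (S i))).

(* Main.v *)
Require Import Defs.
From Stdlib Require Import List ZArith Lia Classical.
Import ListNotations.
Open Scope Z_scope.

Fixpoint Pm (w : word) : Z :=
  match w with [] => 0 | a :: t => Pm t + height t end.
Fixpoint Qm (w : word) : Z :=
  match w with [] => 0 | a :: t => Qm t + 2 * Pm t + height t end.

Lemma height_cons a t : height (a :: t) = lval a + height t.
Proof. reflexivity. Qed.

Lemma height_app x y : height (x ++ y) = height x + height y.
Proof. induction x as [|a x IH]; [reflexivity|].
  rewrite <- app_comm_cons, !height_cons, IH; ring. Qed.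

Lemma Pm_app x y : Pm (x ++ y) = Pm x + Pm y + Z.of_nat (length x) * height y.
Proof. induction x as [|a x IH]; [simpl; ring|].
  rewrite <- app_comm_cons. cbn [Pm length]. rewrite IH, height_app, Nat2Z.inj_succ. ring. Qed.

Lemma Qm_app x y : Qm (x ++ y) = Qm x + Qm y + 2 * Z.of_nat (length x) * Pm y
   + Z.of_nat (length x) * Z.of_nat (length x) * height y.
Proof. induction x as [|a x IH]; [simpl; ring|].
  rewrite <- app_comm_cons. cbn [Qm length]. rewrite IH, Pm_app, height_app, Nat2Z.inj_succ. ring. Qed.

Lemma height_lb w : - Z.of_nat (length w) <= height w.
Proof. induction w as [|a w IH]; [simpl; lia|]. rewrite height_cons. cbn [length].
  destruct a; simpl lval; lia. Qed.

Lemma Pm_lb w : - Z.of_nat (length w) * Z.of_nat (length w) <= Pm w.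
Proof. induction w as [|a w IH]; [simpl; lia|]. cbn [Pm length].
  pose proof (height_lb w). nia. Qed.

Lemma Qm_lb w : - Z.of_nat (length w) * Z.of_nat (length w) * Z.of_nat (length w) <= Qm w.
Proof. induction w as [|a w IH]; [simpl; lia|]. cbn [Qm length].
  pose proof (height_lb w). pose proof (Pm_lb w). nia. Qed.

Lemma suffix_height k w : height (skipn k w) = height w - e k w.
Proof. unfold e. rewrite <- (firstn_skipn k w) at 2. rewrite height_app. ring. Qed.

Lemma Pneg w : (forall k, (1 <= k)%nat -> (k <= length w - 1)%nat -> height (skipn k w) < 0) ->
  Pm w <= 0 /\ ((2 <= length w)%nat -> Pm w < 0).
Proof.
  induction w as [|a t IH]; intros H.
  - cbn. split; [lia| intros; lia].
  - assert (Ht: forall k, (1 <= k)%nat -> (k <= length t - 1)%nat -> height (skipn k t) < 0).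
    { intros k ? ?. apply (H (S k)); cbn [length]; lia. }
    destruct (IH Ht) as [IH1 IH2]. cbn [Pm].
    destruct t as [|b t'].
    + cbn. split; [lia| intros; lia].
    + assert (height (b :: t') < 0) by (apply (H 1%nat); cbn [length]; lia).
      split; [lia| intros; lia].
Qed.

Lemma Ppos w : (forall k, (1 <= k)%nat -> (k <= length w - 1)%nat -> height (skipn k w) > 0) ->
  Pm w >= 0 /\ ((2 <= length w)%nat -> Pm w > 0).
Proof.
  induction w as [|a t IH]; intros H.
  - cbn. split; [lia| intros; lia].
  - assert (Ht: forall k, (1 <= k)%nat -> (k <= length t - 1)%nat -> height (skipn k t) > 0).
    { intros k ? ?. apply (H (S k)); cbn [length]; lia. }
    destruct (IH Ht) as [IH1 IH2]. cbn [Pm].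
    destruct t as [|b t'].
    + cbn. split; [lia| intros; lia].
    + assert (height (b :: t') > 0) by (apply (H 1%nat); cbn [length]; lia).
      split; [lia| intros; lia].
Qed.

Lemma prime_len P : prime_word P -> (2 <= length P)%nat.
Proof. intros [Hn [Hb _]]. unfold balanced in Hb.
  destruct P as [|a [|b t]]; [congruence| |cbn; lia].
  destruct a; discriminate. Qed.

Lemma upper_P U : upper_prime U -> Pm U < 0.
Proof. intros [Hp Hk]. pose proof (prime_len U Hp).
  destruct Hp as [_ [Hb _]]. unfold balanced in Hb.
  apply (Pneg U); [|lia]. intros k ? ?. rewrite suffix_height, Hb.
  specialize (Hk k H0 H1). lia. Qed.

Lemma lower_P D : lower_prime D -> Pm D > 0.
Proof. intros [Hp Hk]. pose proof (prime_len D Hp).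
  destruct Hp as [_ [Hb _]]. unfold balanced in Hb.
  apply (Ppos D); [|lia]. intros k ? ?. rewrite suffix_height, Hb.
  specialize (Hk k H0 H1). lia. Qed.

Lemma step_dec X Y : reduction_step X Y -> length Y = length X /\ Qm Y < Qm X.
Proof.
  intros [W1 [U [D [W2 [HX [HU [HD [HY _]]]]]]]]. subst.
  pose proof (upper_P U HU) as PU. pose proof (lower_P D HD) as PD.
  pose proof (prime_len U (proj1 HU)). pose proof (prime_len D (proj1 HD)).
  destruct HU as [[_ [HbU _]] _]. destruct HD as [[_ [HbD _]] _].
  unfold balanced in *.
  split. { rewrite !length_app. lia. }
  rewrite !Qm_app, !Pm_app, !height_app, ?length_app, ?Nat2Z.inj_add, HbU, HbD.
  nia.
Qed.

Theorem proposition6p7 :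
  forall (X : word), balanced X ->
  forall f : nat -> word, reduction_run X f ->
  exists n : nat, reduced (f n).
Proof.
  intros X _ f [H0 Hr].
  apply NNPP. intros Hno.
  assert (Hs : forall i, reduction_step (f i) (f (S i))).
  { intros i. apply (proj2 (Hr i)). intros Hi. apply Hno. exists i. exact Hi. }
  set (N := Z.of_nat (length X)).
  assert (Hi : forall i, length (f i) = length X /\ Qm (f i) <= Qm X - Z.of_nat i).
  { induction i as [|i IH].
    - rewrite H0. split; [reflexivity| cbn; lia].
    - destruct (step_dec _ _ (Hs i)) as [Hl Hq]. destruct IH as [IH1 IH2].
      split; [congruence| rewrite Nat2Z.inj_succ; lia]. }
  destruct (Hi (Z.to_nat (Qm X + N * N * N + 1))) as [Hl Hq].
  pose proof (Qm_lb (f (Z.to_nat (Qm X + N * N * N + 1)))) as Hlb.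
  rewrite Hl in Hlb. fold N in Hlb.
  assert (0 <= N * N * N) by (unfold N; nia).
  rewrite Z2Nat.id in Hq; lia.
Qed.
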